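(* Suppose the p-values are conditionally super-uniform: for every $t$ with $\theta_t=0$, $\mathbb{P}(p_t\le U\mid\mathcal{F}_{t-1})\le U$ a.s. for every $\mathcal F_{t-1}$-measurable $[0,1]$-valued $U$. (a) If the $\mathcal{F}_{t-1}$-measurable testing levels satisfy, a.s. for every $t\ge1$, $\widehat{\mathrm{FDP}}^{\mathrm{pL\text{-}RAI}}(t):=\sum_{j=1}^t\frac{\alpha_j}{R_{j-1}+1}\le\alpha$, then $\mathrm{FDR}(t)\le\alpha$ for all $t$. (b) Let $(\lambda_t)_{t\ge1}$ be $(0,1)$-valued with each $\lambda_t$ $\mathcal{F}_{t-1}$-measurable, and let $\widehat{\mathrm{FDP}}^{\mathrm{pS\text{-}RAI}}(t):=\sum_{j=1}^t\frac{\alpha_j}{R_{j-1}+1}\cdot\frac{\mathbb{1}\{p_j>\lambda_j\}}{1-\lambda_j}$. Then (i) $\mathbb{E}[\widehat{\mathrm{FDP}}^{\mathrm{pS\text{-}RAI}}(t)]\ge\mathbb{E}[\mathrm{FDP}^*_{\mathrm{e}}(t)]$ for all $t$, where $\mathrm{FDP}^*_{\mathrm{e}}(t)=\sum_{j\in\mathcal{H}_0(t)}\alpha_j/(R_{j-1}+1)$; and (ii) if the testing levels satisfy $\widehat{\mathrm{FDP}}^{\mathrm{pS\text{-}RAI}}(t)\le\alpha$ a.s. for every $t$, then $\mathrm{FDR}(t)\le\alpha$ for all $t$.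
   Context: Let $\alpha\in(0,1)$ be a target level. Hypotheses are indexed by $t=1,2,\dots$; $\theta_t\in\{0,1\}$ is a fixed (non-random) indicator with $\theta_t=0$ iff the $t$-th null hypothesis is true. $p_1,p_2,\dots$ are $[0,1]$-valued random variables (p-values). Testing levels $\alpha_1,\alpha_2,\dots$ are $[0,1]$-valued random variables and the decisions are $\delta_t=\mathbb{1}\{p_t\le\alpha_t\}$. Let $\mathcal{F}_t=\sigma(\delta_1,\dots,\delta_t)$, $\mathcal{F}_0$ trivial; each $\alpha_t$ is required to be $\mathcal{F}_{t-1}$-measurable. $R_t=\sum_{j=1}^t\delta_j$, $R_0=0$. $\mathcal{H}_0(t)=\{j\le t:\theta_j=0\}$. $\mathrm{FDR}(t)=\mathbb{E}\big[\sum_{j\in\mathcal{H}_0(t)}\delta_j/(R_t\vee 1)\big]$. *)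

(* Defs.v *)
From HB Require Import structures.
From mathcomp Require Import all_boot all_order all_algebra.
From mathcomp Require Import all_classical all_reals all_analysis.
Set Implicit Arguments. Unset Strict Implicit. Unset Printing Implicit Defensive.
Import Order.TTheory GRing.Theory Num.Theory.
Local Open Scope classical_set_scope.
Local Open Scope ring_scope.

(* Hypotheses are indexed by t = 1,2,...; index 0
   of every sequence is unused.  theta t = false  <->  the t-th null is true. *)

Section OnlineFDR.
Context {d : measure_display} {T : measurableType d} {R : realType}.
Variables (p alpha : nat -> T -> R).

Definition delta (j : nat) (w : T) : bool := p j w <= alpha j w.

Definition Rcount (t : nat) (w : T) : nat :=
  (\sum_(1 <= j < t.+1) delta j w)%N.

Definition hist (t : nat) (w : T) : seq bool :=
  [seq delta j w | j <- iota 1 t].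

(* F_t = sigma(delta_1, ..., delta_t): the preimages under the finite-valued
   map (delta_1,...,delta_t) of arbitrary sets of {0,1}^t (discrete sigma-algebra). *)
Definition F_event (t : nat) (A : set T) : Prop :=
  exists B : set (seq bool), A = hist t @^-1` B.

Definition F_meas (t : nat) (U : T -> R) : Prop :=
  forall B : set R, measurable B -> F_event t (U @^-1` B).

Definition Vcount (theta : nat -> bool) (t : nat) (w : T) : nat :=
  (\sum_(1 <= j < t.+1 | ~~ theta j) delta j w)%N.

Definition FDP (theta : nat -> bool) (t : nat) (w : T) : R :=
  (Vcount theta t w)%:R / (maxn (Rcount t w) 1)%:R.

Definition FDR (P : probability T R) (theta : nat -> bool) (t : nat) : \bar R :=
  (\int[P]_w (FDP theta t w)%:E)%E.

Definition FDPhat_L (t : nat) (w : T) : R :=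
  \sum_(1 <= j < t.+1) alpha j w / (Rcount j.-1 w).+1%:R.

Definition FDPhat_S (lambda : nat -> T -> R) (t : nat) (w : T) : R :=
  \sum_(1 <= j < t.+1)
     (alpha j w / (Rcount j.-1 w).+1%:R *
      ((if lambda j w < p j w then 1 else 0) / (1 - lambda j w))).

Definition FDPstar_e (theta : nat -> bool) (t : nat) (w : T) : R :=
  \sum_(1 <= j < t.+1 | ~~ theta j) alpha j w / (Rcount j.-1 w).+1%:R.

(* Conditional super-uniformity: for every null t >= 1 and every
   F_{t-1}-measurable [0,1]-valued U,  P(p_t <= U | F_{t-1}) <= U  a.s.,
   expressed through the defining property of conditional expectation:
   for every A in F_{t-1},  P(A /\ {p_t <= U}) <= E[U 1_A]. *)
Definition cond_super_uniform (P : probability T R) (theta : nat -> bool) : Prop :=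
  forall t : nat, (0 < t)%N -> ~~ theta t ->
  forall U : T -> R, F_meas t.-1 U -> (forall w, 0 <= U w <= 1) ->
  forall A : set T, F_event t.-1 A ->
    (P (A `&` [set w | (p t w <= U w)%R]) <= \int[P]_(w in A) (U w)%:E)%E.

End OnlineFDR.

(* Main.v *)
Require Import Defs.
From HB Require Import structures.
From mathcomp Require Import all_boot all_order all_algebra.
From mathcomp Require Import all_classical all_reals all_analysis.
From mathcomp Require Import measurable_realfun.
From mathcomp Require Import zify ring lra.
Import Order.TTheory GRing.Theory Num.Theory.
Local Open Scope classical_set_scope.
Local Open Scope ring_scope.

Section Proof4.
Context (d : measure_display) (T : measurableType d) (R : realType).
Variables (P : probability T R) (theta : nat -> bool) (p alpha : nat -> T -> R).
Hypothesis mp : forall t, measurable_fun setT (p t).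
Hypothesis Fal : forall t, (0 < t)%N -> F_meas p alpha t.-1 (alpha t).

Local Notation hist := (hist p alpha).
Local Notation delta := (delta p alpha).
Local Notation Rcount := (Rcount p alpha).

Lemma hist_size t w : size (hist t w) = t.
Proof. by rewrite size_map size_iota. Qed.

Lemma histS t w : hist t.+1 w = rcons (hist t w) (delta t.+1 w).
Proof.
rewrite /Defs.hist.
have -> : (iota 1 t.+1 = iota 1 t ++ [:: t.+1])%N by rewrite -[in LHS](addn1 t) iotaD add1n.
by rewrite map_cat /= cats1.
Qed.

Lemma hist_eqP t w w' : hist t w = hist t w' <->
  (forall j, (0 < j <= t)%N -> delta j w = delta j w').
Proof.
rewrite /Defs.hist; split.
- move/eq_in_map => H j hj; apply: H; rewrite mem_iota; lia.
- move=> H; apply/eq_in_map => j; rewrite mem_iota => hj; apply: H; lia.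
Qed.

Lemma Fmeas_const {t} {U : T -> R} : F_meas p alpha t U ->
  forall w w', hist t w = hist t w' -> U w = U w'.
Proof.
move=> FU w w' hw.
have [B HB] := FU [set U w] (measurable_set1 _).
have Hw : (U @^-1` [set U w]) w by [].
rewrite HB in Hw.
have : (hist t @^-1` B) w' by rewrite /preimage /= -hw.
by rewrite -HB => ->.
Qed.

Definition Fib t (h : seq bool) : set T := hist t @^-1` [set h].

Lemma Fib_meas t h : measurable (Fib t h).
Proof.
elim: t h => [|t IH] h.
  case: h => [|b h].
    by rewrite (_ : Fib 0 [::] = setT) //; apply/seteqP; split => w //= _; rewrite /Fib /preimage /= /Defs.hist.
  by rewrite (_ : Fib 0 _ = set0) //; apply/seteqP; split => w //=; rewrite /Fib /preimage /= /Defs.hist.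
case: (lastP h) => [|h' b].
  rewrite (_ : Fib _ _ = set0) //; apply/seteqP; split => w //=.
have [[w0 hw0]|nw] := pselect (exists w0, hist t w0 = h').
  rewrite (_ : Fib _ _ = Fib t h' `&` p t.+1 @^-1` [set x | (x <= alpha t.+1 w0) = b]).
    apply: measurableI; first exact: IH.
    rewrite -[X in measurable X]setTI; apply: mp => //.
    case: b.
      rewrite (_ : [set x | _] = `]-oo, alpha t.+1 w0]%classic); first exact: measurable_itv.
      by apply/seteqP; split => x /=; rewrite in_itv /=.
    rewrite (_ : [set x | _] = `]alpha t.+1 w0, +oo[%classic); first exact: measurable_itv.
    by apply/seteqP; split => x /=; rewrite in_itv /= andbT ltNge; case: (x <= _).
  apply/seteqP; split => w; rewrite /Fib /preimage /= histS.
    move=> /eqP; rewrite eqseq_rcons => /andP[/eqP H1 /eqP H2]; split => //.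
    by rewrite -H2 /Defs.delta (Fmeas_const (Fal t.+1 (ltn0Sn t)) w w0) // H1.
  move=> [H1 H2]; rewrite H1 /Defs.delta (Fmeas_const (Fal t.+1 (ltn0Sn t)) w w0) //.
    by rewrite H2.
  by rewrite H1.
rewrite (_ : Fib _ _ = set0) //; apply/seteqP; split => w //=.
rewrite /Fib /preimage /= histS => /eqP; rewrite eqseq_rcons => /andP[/eqP H1 _].
by apply: nw; exists w.
Qed.


Lemma cover t (S : set T) :
  S = \big[setU/set0]_(h <- index_enum (t.-tuple bool)) (Fib t h `&` S).
Proof.
rewrite -bigcup_seq; apply/seteqP; split => w.
  move=> Sw.
  have hsz : size (hist t w) == t by rewrite hist_size.
  exists (Tuple hsz); first by rewrite /= mem_index_enum.
  by split.
by move=> [h _ [_ ?]].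
Qed.

Lemma meas_fib_set t (S : set T) :
  (forall h : t.-tuple bool, exists2 S', measurable S' &
     forall w, hist t w = h -> (S w <-> S' w)) -> measurable S.
Proof.
move=> H; rewrite (cover t S); apply: bigsetU_measurable => h _.
have [S' mS' HS] := H h.
rewrite (_ : Fib t h `&` S = Fib t h `&` S').
  by apply: measurableI => //; exact: Fib_meas.
by apply/seteqP; split => w [hw sw]; split => //; apply/(HS w hw).
Qed.

Lemma meas_fun_fib t (f : T -> R) :
  (forall h : t.-tuple bool, exists2 g : T -> R, measurable_fun setT g &
     forall w, hist t w = h -> f w = g w) -> measurable_fun setT f.
Proof.
move=> H _ B mB; rewrite setTI; apply: (@meas_fib_set t) => h.
have [g mg fg] := H h.
exists (g @^-1` B).
  by have := mg measurableT B mB; rewrite setTI.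
by move=> w hw; rewrite /preimage /= (fg w hw).
Qed.

Lemma const_fib t (f : T -> R) :
  (forall w w', hist t w = hist t w' -> f w = f w') -> measurable_fun setT f.
Proof.
move=> H; apply: (@meas_fun_fib t) => h.
have [[w0 hw0]|nw] := pselect (exists w0, hist t w0 = h).
  exists (cst (f w0)); first exact: measurable_cst.
  by move=> w hw; apply: H; rewrite hw hw0.
exists (cst 0); first exact: measurable_cst.
by move=> w hw; exfalso; apply: nw; exists w.
Qed.

Lemma int_fib (t : nat) (f : T -> \bar R) : measurable_fun setT f -> (forall w, 0 <= f w)%E ->
  (\int[P]_w f w = \sum_(h <- index_enum (t.-tuple bool)) \int[P]_(w in Fib t h) f w)%E.
Proof.
move=> mf f0.
have E : [set: T] = \big[setU/set0]_(h <- index_enum (t.-tuple bool)) Fib t h.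
  by rewrite {1}(cover t setT); apply: eq_bigr => h _; rewrite setIT.
rewrite E; apply: ge0_integral_bigsetU.
- by move=> h; exact: Fib_meas.
- exact: index_enum_uniq.
- move=> i j _ _ [w [hi hj]]; apply: val_inj.
  by rewrite /= -[LHS]hi -[RHS]hj.
- by rewrite -E.
- by move=> w _; exact: f0.
Qed.


Lemma hist_le i t w w' : (i <= t)%N -> hist t w = hist t w' -> hist i w = hist i w'.
Proof.
move=> it /hist_eqP H; apply/hist_eqP => j hj; apply: H; lia.
Qed.

Lemma Rcount_fib {t w w'} : hist t w = hist t w' -> Rcount t w = Rcount t w'.
Proof.
move/hist_eqP => H; apply: eq_big_nat => j hj; rewrite H //; lia.
Qed.

Lemma RcountS j w : (0 < j)%N -> Rcount j w = (Rcount j.-1 w + delta j w)%N.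
Proof. by case: j => // j _; rewrite /Defs.Rcount big_nat_recr. Qed.

Lemma Rcount_mono i t w : (i <= t)%N -> (Rcount i w <= Rcount t w)%N.
Proof.
move=> it; rewrite /Defs.Rcount (@big_cat_nat _ _ _ i.+1 1 t.+1) //=; try lia.
Qed.

Definition gR j w : R := ((Rcount j.-1 w).+1%:R)^-1.

Lemma gR_ge0 j w : 0 <= gR j w.
Proof. by rewrite /gR invr_ge0. Qed.

Lemma gR_fib j w w' : hist j.-1 w = hist j.-1 w' -> gR j w = gR j w'.
Proof. by move=> H; rewrite /gR (Rcount_fib H). Qed.

Lemma gR_meas j : measurable_fun setT (gR j).
Proof. apply: (@const_fib j.-1) => w w' H; exact: gR_fib. Qed.

Lemma alpha_meas j : (0 < j)%N -> measurable_fun setT (alpha j).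
Proof. by move=> j0; apply: (@const_fib j.-1) => w w' H; apply: (Fmeas_const (Fal j j0)). Qed.

Definition Dset j : set T := [set w | delta j w].

Lemma Dset_meas j : (0 < j)%N -> measurable (Dset j).
Proof.
move=> j0; apply: (@meas_fib_set j.-1) => h.
have [[w0 hw0]|nw] := pselect (exists w0, hist j.-1 w0 = h).
  exists (p j @^-1` `]-oo, alpha j w0]%classic).
    by have := mp j measurableT _ (measurable_itv `]-oo, alpha j w0]); rewrite setTI.
  move=> w hw; rewrite /Dset /preimage /= /Defs.delta in_itv /=.
  by rewrite (Fmeas_const (Fal j j0) w w0) // hw hw0.
exists set0 => // w hw; exfalso; apply: nw; by exists w.
Qed.

Lemma deltaE j w : (delta j w)%:R = \1_(Dset j) w :> R.
Proof.
rewrite indicE; case: (boolP (delta j w)) => H.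
  by rewrite mem_set.
by rewrite memNset //; rewrite /Dset /=; apply/negP.
Qed.

Lemma delta_meas j : (0 < j)%N -> measurable_fun setT (fun w => (delta j w)%:R : R).
Proof.
move=> j0; rewrite (_ : (fun w => _) = \1_(Dset j)); last by apply: funext => w; rewrite deltaE.
by apply: measurable_indic; exact: Dset_meas.
Qed.

Lemma sum_meas (F : nat -> T -> R) (Q : pred nat) t :
  (forall j, (0 < j)%N -> measurable_fun setT (F j)) ->
  measurable_fun setT (fun w => \sum_(1 <= j < t.+1 | Q j) F j w).
Proof.
move=> mF.
rewrite (_ : (fun w => _) = (fun w => \sum_(j <- index_iota 1 t.+1)
   (if (0 < j)%N && Q j then F j w else 0))).
  apply: measurable_sum => j; case H: ((0 < j)%N && Q j) => /=.
    by move/andP: H => [j0 _]; exact: mF.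
  exact: measurable_cst.
apply: funext => w; rewrite big_mkcond big_seq [RHS]big_seq; apply: eq_bigr => j.
by rewrite mem_index_iota => /andP[j1 _]; rewrite j1.
Qed.

Lemma int_sum_nat (F : nat -> T -> R) (Q : pred nat) t :
  (forall j, (0 < j)%N -> measurable_fun setT (F j)) ->
  (forall j w, (0 < j)%N -> 0 <= F j w) ->
  (\int[P]_w (\sum_(1 <= j < t.+1 | Q j) F j w)%:E =
   \sum_(1 <= j < t.+1 | Q j) \int[P]_w (F j w)%:E)%E.
Proof.
move=> mF F0.
pose G j w := if (0 < j)%N && Q j then (F j w)%:E else 0%E.
transitivity (\sum_(j <- index_iota 1 t.+1) \int[P]_w G j w)%E.
  rewrite -ge0_integral_sum //.
  - apply: eq_integral => w _; rewrite -sumEFin big_mkcond big_seq [RHS]big_seq.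
    apply: eq_bigr => j; rewrite mem_index_iota => /andP[j1 _].
    by rewrite /G j1 /=; case: (Q j).
  - move=> j; rewrite /G; case H: ((0 < j)%N && Q j) => /=.
      by move/andP: H => [j0 _]; apply/measurable_EFinP; exact: mF.
    exact: measurable_cst.
  - move=> j w _; rewrite /G; case: ifP => [/andP[j0 _]|_] //.
    by rewrite lee_fin; exact: F0.
rewrite [RHS]big_mkcond big_seq [RHS]big_seq; apply: eq_bigr => j.
rewrite mem_index_iota => /andP[j1 _]; rewrite /G j1 /=.
by case: (Q j) => //; rewrite integral0.
Qed.


Hypothesis hal : forall t w, 0 <= alpha t w <= 1.
Hypothesis csu : cond_super_uniform p alpha P theta.

Lemma Fib_eq t h w : Fib t h w -> hist t w = h.
Proof. by []. Qed.

Lemma key_a j : (0 < j)%N -> ~~ theta j ->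
  (\int[P]_w ((delta j w)%:R * gR j w)%:E <= \int[P]_w (alpha j w * gR j w)%:E)%E.
Proof.
move=> j0 nj.
rewrite (int_fib j.-1); last 2 first.
- apply/measurable_EFinP; apply: measurable_funM; [exact: delta_meas | exact: gR_meas].
- by move=> w; rewrite lee_fin mulr_ge0 ?gR_ge0.
rewrite [leRHS](int_fib j.-1); last 2 first.
- apply/measurable_EFinP; apply: measurable_funM; [exact: alpha_meas | exact: gR_meas].
- by move=> w; rewrite lee_fin mulr_ge0 ?gR_ge0 //; case/andP: (hal j w).
apply: lee_sum => h _.
have [[w0 hw0]|nw] := pselect (exists w0, hist j.-1 w0 = h); last first.
  rewrite (_ : Fib j.-1 h = set0) ?integral_set0 //.
  by apply/seteqP; split => w //= hw; apply: nw; exists w.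
have mF := Fib_meas j.-1 h.
rewrite (eq_integral (fun w => ((gR j w0)%:E * (\1_(Dset j) w)%:E)%E)); last first.
  move=> w /set_mem/Fib_eq hw; rewrite -EFinM mulrC deltaE (@gR_fib j w w0) //.
  by rewrite hw hw0.
rewrite (ge0_integralZl_EFin P mF); last 3 first.
- by move=> w _; rewrite lee_fin indicE ler0n.
- apply/measurable_EFinP; apply: measurable_funTS; apply: measurable_indic; exact: Dset_meas.
- exact: gR_ge0.
rewrite integral_indic //; last exact: Dset_meas.
rewrite [leRHS](eq_integral (fun w => ((gR j w0)%:E * (alpha j w)%:E)%E)); last first.
  move=> w /set_mem/Fib_eq hw; rewrite -EFinM mulrC (@gR_fib j w w0) //.
  by rewrite hw hw0.
rewrite (ge0_integralZl_EFin P mF); last 3 first.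
- by move=> w _; rewrite lee_fin; case/andP: (hal j w).
- apply/measurable_EFinP; apply: measurable_funTS; exact: alpha_meas.
- exact: gR_ge0.
apply: lee_wpmul2l; first by rewrite lee_fin gR_ge0.
rewrite setIC.
exact: (csu j j0 nj (alpha j) (Fal j j0) (hal j) (Fib j.-1 h) (ex_intro _ [set tval h] erefl)).
Qed.


Lemma ind_gt_meas j (c : R) :
  measurable_fun setT (fun w => (if c < p j w then 1 else 0) : R).
Proof.
rewrite (_ : (fun w => _) = \1_(p j @^-1` `]c, +oo[%classic)).
  apply: measurable_indic.
  by have := mp j measurableT _ (measurable_itv `]c, +oo[); rewrite setTI.
apply: funext => w; rewrite indicE; case: (boolP (c < p j w)) => H.
  by rewrite mem_set //= /preimage /= in_itv /= H.
by rewrite memNset //= /preimage /= in_itv /= andbT; apply/negP.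
Qed.

Definition termS (lambda : nat -> T -> R) j w : R :=
  alpha j w / (Rcount j.-1 w).+1%:R *
      ((if lambda j w < p j w then 1 else 0) / (1 - lambda j w)).

Section Lam.
Variable lambda : nat -> T -> R.
Hypothesis hl : forall t w, 0 < lambda t w < 1.
Hypothesis Fl : forall t, (0 < t)%N -> F_meas p alpha t.-1 (lambda t).

Lemma termS_ge0 j w : 0 <= termS lambda j w.
Proof.
rewrite /termS; apply: mulr_ge0; first by apply: mulr_ge0; [case/andP: (hal j w)|rewrite invr_ge0].
apply: mulr_ge0; first by case: ifP.
by rewrite invr_ge0 subr_ge0; case/andP: (hl j w) => _ /ltW.
Qed.

Lemma termS_fib j w w0 : (0 < j)%N -> hist j.-1 w = hist j.-1 w0 ->
  termS lambda j w = (alpha j w0 * gR j w0 / (1 - lambda j w0)) *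
     (if lambda j w0 < p j w then 1 else 0).
Proof.
move=> j0 H; rewrite /termS (Fmeas_const (Fal j j0) w w0 H) (Fmeas_const (Fl j j0) w w0 H).
rewrite (Rcount_fib H) /gR; rewrite -!mulrA; congr (_ * _); congr (_ * _).
by rewrite mulrC.
Qed.

Lemma termS_meas j : (0 < j)%N -> measurable_fun setT (termS lambda j).
Proof.
move=> j0; apply: (@meas_fun_fib j.-1) => h.
have [[w0 hw0]|nw] := pselect (exists w0, hist j.-1 w0 = h).
  exists (fun w => (alpha j w0 * gR j w0 / (1 - lambda j w0)) *
     (if lambda j w0 < p j w then 1 else 0)).
    by apply: measurable_funM; [exact: measurable_cst | exact: ind_gt_meas].
  by move=> w hw; apply: termS_fib => //; rewrite hw hw0.
exists (cst 0); first exact: measurable_cst.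
by move=> w hw; exfalso; apply: nw; exists w.
Qed.

Lemma key_b j : (0 < j)%N -> ~~ theta j ->
  (\int[P]_w (alpha j w * gR j w)%:E <= \int[P]_w (termS lambda j w)%:E)%E.
Proof.
move=> j0 nj.
rewrite (int_fib j.-1); last 2 first.
- apply/measurable_EFinP; apply: measurable_funM; [exact: alpha_meas | exact: gR_meas].
- by move=> w; rewrite lee_fin mulr_ge0 ?gR_ge0 //; case/andP: (hal j w).
rewrite [leRHS](int_fib j.-1); last 2 first.
- by apply/measurable_EFinP; exact: termS_meas.
- by move=> w; rewrite lee_fin termS_ge0.
apply: lee_sum => h _.
have [[w0 hw0]|nw] := pselect (exists w0, hist j.-1 w0 = h); last first.
  rewrite (_ : Fib j.-1 h = set0) ?integral_set0 //.
  by apply/seteqP; split => w //= hw; apply: nw; exists w.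
have mF := Fib_meas j.-1 h.
set c := alpha j w0 * gR j w0.
set l := lambda j w0.
have c0 : 0 <= c by rewrite /c mulr_ge0 ?gR_ge0 //; case/andP: (hal j w0).
have [l0 l1] : 0 < l /\ l < 1 by case/andP: (hl j w0).
set L := p j @^-1` `]l, +oo[%classic.
set M := p j @^-1` `]-oo, l]%classic.
have mL : measurable L by have := mp j measurableT _ (measurable_itv `]l, +oo[); rewrite setTI.
have mM : measurable M by have := mp j measurableT _ (measurable_itv `]-oo, l]); rewrite setTI.
rewrite (eq_integral (cst c%:E)); last first.
  move=> w /set_mem/Fib_eq hw; rewrite /c (Fmeas_const (Fal j j0) w w0) ?(@gR_fib j w w0) //.
  by rewrite hw hw0.
  by rewrite hw hw0.
rewrite integral_cst //.
rewrite (eq_integral (fun w => ((c / (1 - l))%:E * (\1_L w)%:E)%E)); last first.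
  move=> w /set_mem/Fib_eq hw; rewrite -EFinM (@termS_fib j w w0) //; last by rewrite hw hw0.
  congr (_ * _)%:E; rewrite indicE; case: (boolP (l < p j w)) => H.
    by rewrite mem_set //= /L /preimage /= in_itv /= H.
  by rewrite memNset //= /L /preimage /= in_itv /= andbT; apply/negP.
rewrite (ge0_integralZl_EFin P mF); last 3 first.
- by move=> w _; rewrite lee_fin indicE ler0n.
- by apply/measurable_EFinP; apply: measurable_funTS; apply: measurable_indic.
- by rewrite divr_ge0 // subr_ge0 ltW.
rewrite integral_indic //.
have hsu := csu j j0 nj (lambda j) (Fl j j0)
  (fun w => let: conj a b := andP (hl j w) in ltac:(apply/andP; split; exact: ltW))
  (Fib j.-1 h) (ex_intro _ [set tval h] erefl).
rewrite (eq_integral (cst l%:E)) in hsu; last first.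
  move=> w /set_mem/Fib_eq hw; rewrite /l (Fmeas_const (Fl j j0) w w0) //.
  by rewrite hw hw0.
rewrite integral_cst // in hsu.
rewrite (_ : Fib j.-1 h `&` _ = Fib j.-1 h `&` M) in hsu; last first.
  apply/seteqP; split => w [hw H]; split => //; move: H; rewrite /M /preimage /= in_itv /=;
    by rewrite /l (Fmeas_const (Fl j j0) w w0) // hw hw0.
have dec : P (Fib j.-1 h) = (P (Fib j.-1 h `&` M) + P (L `&` Fib j.-1 h))%E.
  rewrite -measureU //; [|exact: measurableI|exact: measurableI|].
    congr (P _); apply/seteqP; split => w.
      move=> Fw; have [H|H] := leP (p j w) l.
        by left; split => //; rewrite /M /preimage /= in_itv.
      by right; split => //; rewrite /L /preimage /= in_itv /= H.
    by move=> [[]|[]].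
  apply/seteqP; split => w // [[_ Hm] [Hl _]]; move: Hm Hl.
  rewrite /M /L /preimage /= !in_itv /= andbT => H1 H2.
  by move: (lt_le_trans H2 H1); rewrite ltxx.
pose z := fine (P (Fib j.-1 h)).
pose y := fine (P (Fib j.-1 h `&` M)).
pose x := fine (P (L `&` Fib j.-1 h)).
have ez : (P : {measure set T -> \bar R}) (Fib j.-1 h) = z%:E.
  by rewrite /z fineK // fin_num_measure.
have ey : (P : {measure set T -> \bar R}) (Fib j.-1 h `&` M) = y%:E.
  by rewrite /y fineK // fin_num_measure //; exact: measurableI.
have ex : (P : {measure set T -> \bar R}) (L `&` Fib j.-1 h) = x%:E.
  by rewrite /x fineK // fin_num_measure //; exact: measurableI.
move: hsu; rewrite ez ey => hyz'.
have hz : z = y + x by apply/EFin_inj; rewrite EFinD -ey -ex -ez; exact: dec.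
have hyz : y <= l * z by rewrite -lee_fin EFinM; exact: hyz'.
rewrite [X in (_ <= _ * X)%E](_ : _ = x%:E); last by rewrite -ex.
rewrite -!EFinM lee_fin.
have y0 : 0 <= y by rewrite /y fine_ge0 // measure_ge0.
have hx : (1 - l) * z <= x by lra.
have l1' : 0 < 1 - l by lra.
have -> : c * z = c / (1 - l) * ((1 - l) * z).
  by rewrite mulrA divfK // gt_eqF.
by apply: ler_wpM2l => //; rewrite divr_ge0 // ltW.
Qed.

End Lam.


Local Notation FDP := (FDP p alpha theta).

Lemma FDP_meas t : measurable_fun setT (FDP t).
Proof.
apply: (@const_fib t) => w w' H; rewrite /Defs.FDP (Rcount_fib H); congr (_ / _).
congr (_%:R); rewrite /Vcount big_seq_cond [RHS]big_seq_cond; apply: eq_bigr => j.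
rewrite mem_index_iota => /andP[/andP[j1 jt] _]; move/hist_eqP: H => H.
by rewrite H //; lia.
Qed.

Lemma FDP_ge0 t w : 0 <= FDP t w.
Proof. by rewrite /Defs.FDP divr_ge0. Qed.

Lemma FDP_le t w :
  FDP t w <= \sum_(1 <= j < t.+1 | ~~ theta j) (delta j w)%:R * gR j w.
Proof.
rewrite /Defs.FDP /Vcount natr_sum mulr_suml.
rewrite big_seq_cond [leRHS]big_seq_cond; apply: ler_sum => j /andP[jin _].
move: jin; rewrite mem_index_iota => /andP[j1 jt].
case: (boolP (delta j w)) => dj; last first.
  by rewrite !mul0r.
rewrite !mul1r /gR.
have h1 := @RcountS j w j1; rewrite dj in h1.
have h2 : (Rcount j w <= Rcount t w)%N by apply: (@Rcount_mono j t w); lia.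
rewrite lef_pV2 ?posrE ?ltr0n ?ler_nat //; lia.
Qed.

Lemma S1 t : (FDR p alpha P theta t <= \int[P]_w (FDPstar_e p alpha theta t w)%:E)%E.
Proof.
rewrite /FDR.
apply: (@le_trans _ _ (\int[P]_w (\sum_(1 <= j < t.+1 | ~~ theta j)
   (delta j w)%:R * gR j w)%:E)%E).
  apply: ge0_le_integral => //.
  - by move=> w _; rewrite lee_fin FDP_ge0.
  - by apply/measurable_EFinP; exact: FDP_meas.
  - apply/measurable_EFinP; apply: sum_meas => j j0.
    by apply: measurable_funM; [exact: delta_meas | exact: gR_meas].
  - by move=> w _; rewrite lee_fin FDP_le.
have H1 := int_sum_nat (fun j w => (delta j w)%:R * gR j w) (fun j => ~~ theta j) t.
rewrite /= in H1; rewrite H1; last 2 first.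
- by move=> j j0; apply: measurable_funM; [exact: delta_meas | exact: gR_meas].
- by move=> j w _; rewrite mulr_ge0 ?gR_ge0.
have H2 := int_sum_nat (fun j w => alpha j w * gR j w) (fun j => ~~ theta j) t.
rewrite /= in H2; rewrite /FDPstar_e H2; last 2 first.
- by move=> j j0; apply: measurable_funM; [exact: alpha_meas | exact: gR_meas].
- by move=> j w _; rewrite mulr_ge0 ?gR_ge0 //; case/andP: (hal j w).
rewrite big_seq_cond [leRHS]big_seq_cond; apply: lee_sum => j /andP[jin nj].
move: jin; rewrite mem_index_iota => /andP[j1 _].
exact: key_a.
Qed.

Lemma FDPstar_ge0 t w : 0 <= FDPstar_e p alpha theta t w.
Proof.
by apply: sumr_ge0 => j _; rewrite mulr_ge0 ?gR_ge0 //; case/andP: (hal j w).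
Qed.

Lemma FDPstar_meas t : measurable_fun setT (FDPstar_e p alpha theta t).
Proof.
apply: sum_meas => j j0.
by apply: measurable_funM; [exact: alpha_meas | exact: gR_meas].
Qed.

Lemma FDPstar0 : (\int[P]_w (FDPstar_e p alpha theta 0 w)%:E = 0)%E.
Proof.
rewrite (eq_integral (cst 0%E)) ?integral0 // => w _.
by rewrite /FDPstar_e big_geq.
Qed.

Lemma bound_ae (a : R) (f : T -> R) : 0 <= a -> measurable_fun setT f ->
  (forall w, 0 <= f w) -> {ae P, forall w, f w <= a} ->
  (\int[P]_w (f w)%:E <= a%:E)%E.
Proof.
move=> a0 mf f0 hae.
apply: (@le_trans _ _ (\int[P]_w (cst a%:E) w)%E).
  apply: (@ae_ge0_le_integral _ _ _ P setT measurableT (fun w => (f w)%:E) (cst a%:E)).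
  - by move=> w _; rewrite lee_fin.
  - exact/measurable_EFinP.
  - by move=> w _; rewrite /= lee_fin.
  - exact: measurable_cst.
  - by move: hae; apply: filterS => w H _; rewrite /= lee_fin.
by rewrite integral_cst // [X in (_ * X <= _)%E](_ : _ = 1%E) ?mule1 //; exact: probability_setT.
Qed.

Section Lam2.
Variable lambda : nat -> T -> R.
Hypothesis hl : forall t w, 0 < lambda t w < 1.
Hypothesis Fl : forall t, (0 < t)%N -> F_meas p alpha t.-1 (lambda t).

Lemma S2 t : (\int[P]_w (FDPstar_e p alpha theta t w)%:E
                   <= \int[P]_w (FDPhat_S p alpha lambda t w)%:E)%E.
Proof.
have H2 := int_sum_nat (fun j w => alpha j w * gR j w) (fun j => ~~ theta j) t.
rewrite /= in H2; rewrite /FDPstar_e H2; last 2 first.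
- by move=> j j0; apply: measurable_funM; [exact: alpha_meas | exact: gR_meas].
- by move=> j w _; rewrite mulr_ge0 ?gR_ge0 //; case/andP: (hal j w).
have H3 := int_sum_nat (termS lambda) xpredT t.
rewrite /= in H3; rewrite /FDPhat_S H3; last 2 first.
- by move=> j j0; exact: termS_meas.
- by move=> j w _; exact: termS_ge0.
rewrite [leRHS](bigID (fun j => ~~ theta j)) /=.
apply: le_trans (leeDl _ _); last by apply: sume_ge0 => j _; apply: integral_ge0 => w _;
  rewrite lee_fin termS_ge0.
rewrite big_seq_cond [leRHS]big_seq_cond; apply: lee_sum => j /andP[jin nj].
move: jin; rewrite mem_index_iota => /andP[j1 _].
exact: key_b.
Qed.

End Lam2.

Lemma FDPhatL_meas t : measurable_fun setT (FDPhat_L p alpha t).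
Proof.
have := @sum_meas (fun j w => alpha j w * gR j w) xpredT t.
apply => j j0; apply: measurable_funM; [exact: alpha_meas | exact: gR_meas].
Qed.

Lemma main_a (a : R) : 0 < a ->
  (forall t, (0 < t)%N -> {ae P, forall w, FDPhat_L p alpha t w <= a}) ->
  forall t, (FDR p alpha P theta t <= a%:E)%E.
Proof.
move=> a0 hae t; apply: le_trans (S1 t) _.
case: t => [|t]; first by rewrite FDPstar0 lee_fin ltW.
apply: (le_trans _ (bound_ae _ _ (ltW a0) (FDPhatL_meas t.+1) _ (hae t.+1 erefl))); last first.
  by move=> w; apply: sumr_ge0 => j _; rewrite mulr_ge0 ?gR_ge0 //; case/andP: (hal j w).
apply: ge0_le_integral => //.
- by move=> w _; rewrite lee_fin FDPstar_ge0.
- by apply/measurable_EFinP; exact: FDPstar_meas.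
- by apply/measurable_EFinP; exact: FDPhatL_meas.
move=> w _; rewrite lee_fin /FDPstar_e /FDPhat_L [leRHS](bigID (fun j => ~~ theta j)) /=.
rewrite lerDl; apply: sumr_ge0 => j _.
by rewrite mulr_ge0 ?gR_ge0 //; case/andP: (hal j w).
Qed.

Section Lam3.
Variable lambda : nat -> T -> R.
Hypothesis hl : forall t w, 0 < lambda t w < 1.
Hypothesis Fl : forall t, (0 < t)%N -> F_meas p alpha t.-1 (lambda t).

Lemma FDPhatS_meas t : measurable_fun setT (FDPhat_S p alpha lambda t).
Proof.
have := @sum_meas (termS lambda) xpredT t.
apply => j j0; exact: termS_meas.
Qed.

Lemma main_b (a : R) : 0 < a ->
  (forall t, (0 < t)%N -> {ae P, forall w, FDPhat_S p alpha lambda t w <= a}) ->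
  forall t, (FDR p alpha P theta t <= a%:E)%E.
Proof.
move=> a0 hae t; apply: le_trans (S1 t) _.
case: t => [|t]; first by rewrite FDPstar0 lee_fin ltW.
apply: le_trans (@S2 lambda hl Fl t.+1) _.
apply: (bound_ae _ _ (ltW a0) (FDPhatS_meas t.+1) _ (hae t.+1 erefl)).
by move=> w; apply: sumr_ge0 => j _; exact: (@termS_ge0 lambda hl).
Qed.

End Lam3.

End Proof4.

Theorem proposition4 (d : measure_display) (T : measurableType d) (R : realType)
  (P : probability T R) (a : R) (theta : nat -> bool)
  (p alpha : nat -> T -> R) :
  0 < a < 1 ->
  (forall t, measurable_fun setT (p t)) ->
  (forall t w, 0 <= p t w <= 1) ->
  (forall t w, 0 <= alpha t w <= 1) ->
  (forall t, (0 < t)%N -> F_meas p alpha t.-1 (alpha t)) ->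
  cond_super_uniform p alpha P theta ->
  (* (a) *)
  ((forall t, (0 < t)%N -> {ae P, forall w, FDPhat_L p alpha t w <= a}) ->
     forall t, (FDR p alpha P theta t <= a%:E)%E)
  /\
  (* (b) *)
  (forall lambda : nat -> T -> R,
     (forall t w, 0 < lambda t w < 1) ->
     (forall t, (0 < t)%N -> F_meas p alpha t.-1 (lambda t)) ->
     (* (i) *)
     (forall t, (\int[P]_w (FDPstar_e p alpha theta t w)%:E
                   <= \int[P]_w (FDPhat_S p alpha lambda t w)%:E)%E)
     /\
     (* (ii) *)
     ((forall t, (0 < t)%N -> {ae P, forall w, FDPhat_S p alpha lambda t w <= a}) ->
        forall t, (FDR p alpha P theta t <= a%:E)%E)).
Proof.
move=> /andP[a0 a1] mp hp hal Fal csu; split.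
  by apply: main_a.
move=> lambda hl Fl; split.
  by apply: S2.
by apply: main_b.
Qed.
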